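(* Let $\nu$ be a modulus of variation and $1\le p<\infty$. If $f\in V_p[\nu]$ is $2\pi$-periodic, then there is a constant $C$ (depending on $f$) such that its Fourier coefficients satisfy $|\hat f(n)|\le C\,\nu(n)/n^{1/p}$ for all $n\ge1$.
   Context: A modulus of variation is a nondecreasing concave sequence of positive numbers $\nu(1),\nu(2),\dots$. For $f$ and $n\ge1$, $\upsilon_p(n,f)=\sup(\sum_{j=1}^n|f(I_j)|^p)^{1/p}$ over $n$ nonoverlapping subintervals $I_j$ of $[0,2\pi]$, $f(I)=f(\sup I)-f(\inf I)$; $V_p[\nu]$ is the class of bounded $2\pi$-periodic $f$ with $\upsilon_p(n,f)\le C\nu(n)$ for all $n$ and some $C$. *)

(* Defs.v *)
From HB Require Import structures.
From mathcomp Require Import all_boot all_order all_algebra.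
From mathcomp Require Import all_classical all_reals all_analysis.
Set Implicit Arguments. Unset Strict Implicit. Unset Printing Implicit Defensive.
Import Order.TTheory GRing.Theory Num.Theory.
Local Open Scope classical_set_scope.
Local Open Scope ring_scope.

(* A complex-valued function f = u + i v : R -> C is represented by its real
   and imaginary parts u v : R -> R. *)

Definition modulus_of_variation (R : realType) (nu : nat -> R) : Prop :=
  (forall n, (1 <= n)%N -> 0 < nu n) /\
  (forall n, (1 <= n)%N -> nu n <= nu n.+1) /\
  (forall n, (1 <= n)%N -> nu n.+2 - nu n.+1 <= nu n.+1 - nu n).

Definition incr_abs (R : realType) (u v : R -> R) (a b : R) : R :=
  Num.sqrt ((u b - u a) ^+ 2 + (v b - v a) ^+ 2).

Definition nonoverlapping (R : realType) (n : nat) (a b : 'I_n -> R) : Prop :=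
  (forall j, 0 <= a j /\ a j <= b j /\ b j <= 2 * pi) /\
  (forall i j, i != j -> b i <= a j \/ b j <= a i).

Definition upsilon (R : realType) (p : R) (n : nat) (u v : R -> R) : \bar R :=
  ereal_sup [set r : \bar R | exists (a b : 'I_n -> R), nonoverlapping a b /\
     r = ((\sum_(j < n) (incr_abs u v (a j) (b j)) `^ p) `^ p^-1)%:E].

Definition periodic2pi (R : realType) (g : R -> R) : Prop :=
  forall x, g (x + 2 * pi) = g x.

Definition Vp (R : realType) (p : R) (nu : nat -> R) (u v : R -> R) : Prop :=
  periodic2pi u /\ periodic2pi v /\
  (exists M : R, forall x, `|u x| <= M /\ `|v x| <= M) /\
  (exists C : R, forall n, (1 <= n)%N -> (upsilon p n u v <= (C * nu n)%:E)%E).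

(* Fourier coefficient  hat f(n) = (1/2pi) int_0^{2pi} f(x) e^{-inx} dx,
   real and imaginary parts. *)
Definition fourier_re (R : realType) (u v : R -> R) (n : nat) : R :=
  (2 * pi)^-1 * Rintegral lebesgue_measure `[0, 2 * pi]
    (fun x => u x * cos (n%:R * x) + v x * sin (n%:R * x)).
Definition fourier_im (R : realType) (u v : R -> R) (n : nat) : R :=
  (2 * pi)^-1 * Rintegral lebesgue_measure `[0, 2 * pi]
    (fun x => v x * cos (n%:R * x) - u x * sin (n%:R * x)).
Definition fourier_abs (R : realType) (u v : R -> R) (n : nat) : R :=
  Num.sqrt (fourier_re u v n ^+ 2 + fourier_im u v n ^+ 2).

(* Main.v *)
Require Import Defs.
From HB Require Import structures.
From mathcomp Require Import all_boot all_order all_algebra.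
From mathcomp Require Import all_classical all_reals all_analysis.
From mathcomp Require Import measurable_realfun.
From mathcomp Require Import ring lra.
Set Implicit Arguments. Unset Strict Implicit. Unset Printing Implicit Defensive.
Import Order.TTheory GRing.Theory Num.Theory.
Import numFieldNormedType.Exports.
Local Open Scope classical_set_scope.
Local Open Scope ring_scope.
Section S.

Context {R : realType}.
Notation mu := (@lebesgue_measure R).

Lemma mshift (c : R) : measurable_fun [set: measurableTypeR R] (fun x : measurableTypeR R => (x + c : measurableTypeR R)).
Proof.
apply: measurable_realfun.continuous_measurable_fun => x.
by apply: continuousD => //; exact: cvg_cst.
Qed.

Lemma bdd_int (G : R -> R) (K a b : R) : measurable_fun [set: R] G ->
  (forall x, `|G x| <= K) -> mu.-integrable `[a, b] (EFin \o G).
Proof.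
move=> mG GK; apply: measurable_bounded_integrable => //.
- set z := (X in (X < _)%E); have -> : z = _ := lebesgue_measure_itv `[a, b]%R.
  by rewrite /=; case: ifPn => // _; rewrite -EFinD ltry.
- exact: measurable_funS mG.
- exists K; split; first exact: num_real.
  by move=> M KM x _ /=; exact: (le_trans (GK x) (ltW KM)).
Qed.

Lemma pushforward_shift (c : R) (A : set R) : measurable A ->
  pushforward mu (fun x : R => x + c) A = mu A.
Proof.
move=> mA; apply/esym.
have := (@lebesgue_measure_unique R
  (measure_function_pushforward__canonical__measure_function_Measure mu (mshift c))).
move=> /(_ _ A mA) /= ->//.
move=> _ [[a b] _ <-] /=.
rewrite /pushforward.
have -> : (fun x : R => x + c) @^-1` `]a, b]%classic = `]a - c, b - c]%classic.
  apply/seteqP; split => x /=; rewrite !in_itv/= ?lerBrDr ?ltrBlDr //.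
set z := (X in X = _); have -> : z = _ := lebesgue_measure_itv `]a, b]%R.
set y := (X in _ = X); have -> : y = _ := lebesgue_measure_itv `]a - c, b - c]%R.
rewrite /= !lte_fin ltrD2r; case: ifPn => // _.
by congr (_%:E); rewrite opprB addrA subrK.
Qed.

Lemma preimage_shift_cc (a b c : R) :
  (fun x : R => x + c) @^-1` `[a + c, b + c]%classic = `[a, b]%classic.
Proof. by apply/seteqP; split => x /=; rewrite !in_itv/= !lerD2r. Qed.

Lemma Rint_shift (G : R -> R) (K c a b : R) : measurable_fun [set: R] G ->
  (forall x, `|G x| <= K) ->
  \int[mu]_(x in `[a + c, b + c]) G x = \int[mu]_(t in `[a, b]) G (t + c).
Proof.
move=> mG GK; rewrite /Rintegral; congr fine.
have mf : measurable_fun [set: measurableTypeR R] (fun x : measurableTypeR R => (G x)%:E).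
  exact/measurable_EFinP.
have intf : mu.-integrable ((fun x : R => x + c) @^-1` `[a + c, b + c]%classic)
    ((EFin \o G) \o (fun x : R => x + c)).
  rewrite preimage_shift_cc.
  apply: (@bdd_int (fun t => G (t + c)) K) => //.
  exact: measurableT_comp (mshift c).
have := @integral_pushforward _ _ _ _ R (fun x : measurableTypeR R => (x + c : measurableTypeR R))
  (mshift c) mu `[a + c, b + c]%classic (fun x : measurableTypeR R => (G x)%:E) mf intf (measurable_itv _).
rewrite preimage_shift_cc => <-.
apply/esym; apply: (@eq_measure_integral _ _ _ _ mu
  (measure_function_pushforward__canonical__measure_function_Measure mu (mshift c))).
move=> A mA _ /=; exact: pushforward_shift.
Qed.

Lemma Rint_split (G : R -> R) (K a c b : R) : measurable_fun [set: R] G ->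
  (forall x, `|G x| <= K) -> a <= c -> c <= b ->
  \int[mu]_(x in `[a, b]) G x =
  \int[mu]_(x in `[a, c]) G x + \int[mu]_(x in `[c, b]) G x.
Proof.
move=> mG GK ac cb.
have := @Rintegral_itvB R G (BLeft a) (BRight b) c (bdd_int a b mG GK).
rewrite !bnd_simp => /(_ ac cb) => h.
rewrite -(@Rintegral_itv_obnd_cbnd R c (BRight b)); last first.
  apply: (integrableS _ _ _ (bdd_int c b mG GK)) => //.
  by apply: subset_itvr; rewrite bnd_simp.
by rewrite -h addrC subrK.
Qed.

Lemma Rint_sumitv (G : R -> R) (K a h : R) (m : nat) : measurable_fun [set: R] G ->
  (forall x, `|G x| <= K) -> 0 <= h ->
  \int[mu]_(x in `[a, a + m%:R * h]) G x =
  \sum_(j < m) \int[mu]_(x in `[a + j%:R * h, a + j%:R * h + h]) G x.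
Proof.
move=> mG GK h0; elim: m => [|m IH].
  by rewrite big_ord0 mul0r addr0 set_itv1 Rintegral_set1.
rewrite big_ord_recr/= -IH.
rewrite (@Rint_split G K a (a + m%:R * h) (a + m.+1%:R * h)) //.
- by rewrite -natr1 mulrDl mul1r addrA.
- by rewrite lerDl mulr_ge0.
- by rewrite lerD2l ler_wpM2r// ler_nat.
Qed.

Lemma sum_meas (F : nat -> R -> R) (m : nat) :
  (forall j, measurable_fun [set: R] (F j)) ->
  measurable_fun [set: R] (fun x => \sum_(j < m) F j x).
Proof.
move=> mF; elim: m => [|m IH].
  by under eq_fun do rewrite big_ord0; exact: measurable_cst.
under eq_fun do rewrite big_ord_recr/=.
exact: measurable_funD.
Qed.

Lemma int_sum (F : nat -> R -> R) (K a b : R) (m : nat) :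
  (forall j, measurable_fun [set: R] (F j)) ->
  (forall j x, `|F j x| <= K) ->
  mu.-integrable `[a, b] (EFin \o (fun x => \sum_(j < m) F j x)).
Proof.
move=> mF FK.
apply: (@bdd_int _ (m%:R * K)); first exact: sum_meas.
move=> x; apply: (le_trans (ler_norm_sum _ _ _)).
have -> : m%:R * K = \sum_(j < m) K by rewrite sumr_const card_ord mulr_natl.
by apply: ler_sum => j _.
Qed.

Lemma Rint_sum (F : nat -> R -> R) (K a b : R) (m : nat) :
  (forall j, measurable_fun [set: R] (F j)) ->
  (forall j x, `|F j x| <= K) ->
  \int[mu]_(x in `[a, b]) (\sum_(j < m) F j x) =
  \sum_(j < m) \int[mu]_(x in `[a, b]) F j x.
Proof.
move=> mF FK; elim: m => [|m IH].
  rewrite big_ord0; under eq_Rintegral do rewrite big_ord0.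
  by rewrite Rintegral_cst// mul0r.
rewrite big_ord_recr/= -IH.
have -> : \int[mu]_(x in `[a, b]) (\sum_(j < m.+1) F j x) =
    \int[mu]_(x in `[a, b]) (\sum_(j < m) F j x + F m x).
  by apply: eq_Rintegral => x _; rewrite big_ord_recr.
rewrite RintegralD//; last exact: bdd_int (mF m) (FK m).
exact: int_sum.
Qed.
End S.
Section S2.

Context {R : realType}.

Lemma holder_sum (n : nat) (x : 'I_n -> R) (p B : R) : 1 <= p -> 0 < B ->
  (forall k, 0 <= x k) -> (\sum_k x k `^ p) `^ p^-1 <= B -> (0 < n)%N ->
  \sum_k x k <= B * n%:R / n%:R `^ p^-1.
Proof.
move=> p1 B0 x0 hB n0.
have N0 : 0 < n%:R :> R by rewrite ltr0n.
have [p1e|pn1] := eqVneq p 1.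
  subst p; rewrite invr1 powRr1 ?ler0n// mulfK ?gt_eqF//.
  move: hB; rewrite invr1 powRr1; last by rewrite sumr_ge0// => k _; exact: powR_ge0.
  by under eq_bigr do rewrite powRr1 ?x0//.
have p1' : 1 < p by rewrite lt_neqAle eq_sym pn1.
have p0 : 0 < p by rewrite (lt_trans ltr01).
have ip1 : p^-1 < 1 by rewrite invf_lt1.
set q := (1 - p^-1)^-1.
have iq : q^-1 = 1 - p^-1 by rewrite /q invrK.
have q0 : 0 < q by rewrite /q invr_gt0 subr_gt0.
have pq : p^-1 + q^-1 = 1 by rewrite iq addrC subrK.
set S := \sum_k x k `^ p.
have S0 : 0 <= S by rewrite sumr_ge0// => k _; exact: powR_ge0.
have hS : S <= B `^ p.
  have -> : S = (S `^ p^-1) `^ p by rewrite -powRrM mulVf ?gt_eqF// powRr1.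
  apply: ge0_ler_powR => //; first exact: ltW.
  - by rewrite nnegrE powR_ge0.
  - by rewrite nnegrE ltW.
set c := n%:R `^ (- q^-1).
have c0 : 0 < c by rewrite powR_gt0.
have cq : c `^ q = n%:R^-1.
  by rewrite /c -powRrM mulNr mulVf ?gt_eqF// powR_inv1// ltW.
have Bc : B * n%:R / n%:R `^ p^-1 = B / c.
  rewrite /c powRN invrK iq powRB; last by apply/implyP => _; rewrite gt_eqF.
  by rewrite powRr1 ?ler0n// mulrA.
have key : (\sum_k x k) * (c / B) <= 1.
  rewrite mulr_suml.
  have yk k : x k * (c / B) <= (x k / B) `^ p / p + n%:R^-1 / q.
    rewrite -cq mulrCA mulrC.
    apply: conjugate_powR => //; last exact: ltW.
    by rewrite divr_ge0 // ltW.
  apply: (le_trans (ler_sum _ (fun k _ => yk k))).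
  rewrite big_split /= sumr_const card_ord -mulrnAl -mulr_natr mulVf ?gt_eqF// mul1r.
  rewrite -mulr_suml -[X in _ <= X]pq lerD2r -[X in _ <= X]mul1r ler_pM2r ?invr_gt0//.
  under eq_bigr do rewrite powRM ?x0 ?invr_ge0 ?(ltW B0)//.
  rewrite -mulr_suml -/S.
  have -> : 1 = B `^ p * B^-1 `^ p by rewrite -powRM ?invr_ge0 ?(ltW B0)// mulfV ?gt_eqF// powR1.
  by rewrite ler_pM2r// powR_gt0// invr_gt0.
have -> : \sum_k x k = ((\sum_k x k) * (c / B)) * (B / c).
  by rewrite -mulrA (mulrA (c / B)) divfK ?gt_eqF// mulfV ?gt_eqF// mulr1.
by rewrite Bc -[X in _ <= X]mul1r ler_pM2r ?divr_gt0.
Qed.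
End S2.
Section S3.

Context {R : realType}.

Lemma cs_ineq (X Y c1 c2 : R) : c1 ^+ 2 + c2 ^+ 2 = 1 ->
  X * c1 + Y * c2 <= Num.sqrt (X ^+ 2 + Y ^+ 2).
Proof.
move=> hc.
apply: (le_trans (ler_norm _)).
rewrite -sqrtr_sqr ler_sqrt; last by rewrite addr_ge0 // sqr_ge0.
have h0 : 0 <= (X * c2 - Y * c1) ^+ 2 by exact: sqr_ge0.
have -> : X ^+ 2 + Y ^+ 2 = (X ^+ 2 + Y ^+ 2) * (c1 ^+ 2 + c2 ^+ 2) by rewrite hc mulr1.
rewrite -subr_ge0.
have -> : (X ^+ 2 + Y ^+ 2) * (c1 ^+ 2 + c2 ^+ 2) - (X * c1 + Y * c2) ^+ 2 =
  (X * c2 - Y * c1) ^+ 2 by ring.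
exact: h0.
Qed.

Lemma cosDnpi (x : R) (j : nat) : cos (x + j%:R * pi) = (-1) ^+ j * cos x.
Proof.
elim: j => [|j IH]; first by rewrite mul0r addr0 expr0 mul1r.
by rewrite -natr1 mulrDl mul1r addrA cosDpi IH exprS mulN1r mulNr.
Qed.

Lemma sinDnpi (x : R) (j : nat) : sin (x + j%:R * pi) = (-1) ^+ j * sin x.
Proof.
elim: j => [|j IH]; first by rewrite mul0r addr0 expr0 mul1r.
by rewrite -natr1 mulrDl mul1r addrA sinDpi IH exprS mulN1r mulNr.
Qed.

Lemma m1_even (k : nat) : (-1) ^+ (2 * k)%N = 1 :> R.
Proof. by rewrite exprM sqrrN expr1n expr1n. Qed.

Lemma m1_odd (k : nat) : (-1) ^+ (2 * k).+1 = -1 :> R.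
Proof. by rewrite exprS m1_even mulr1. Qed.

Lemma pair_sum (f : nat -> R) (n : nat) :
  \sum_(j < (2 * n)%N) f j = \sum_(k < n) (f (2 * k)%N + f (2 * k).+1).
Proof.
elim: n => [|n IH]; first by rewrite muln0 !big_ord0.
rewrite [RHS]big_ord_recr /= -IH.
have -> : (2 * n.+1 = (2 * n).+1.+1)%N by rewrite mulnS.
by rewrite !big_ord_recr /= addrA.
Qed.
End S3.

Unset Implicit Arguments.
Set Strict Implicit.
Theorem proposition7p6 (R : realType) (nu : nat -> R) (p : R) (u v : R -> R) :
  modulus_of_variation nu -> 1 <= p ->
  measurable_fun `[0, 2 * pi] u -> measurable_fun `[0, 2 * pi] v ->
  Vp p nu u v ->
  exists C : R, forall n : nat, (1 <= n)%N ->
    fourier_abs u v n <= C * nu n / (n%:R `^ p^-1).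
Proof.
move=> [nu0 [nuinc _]] p1 mu_ mv_ [_ [_ [[M hM] [C hC]]]].
have M0 : 0 <= M by exact: le_trans (normr_ge0 _) (hM 0).1.
set C' := `|C| + 1.
have C'0 : 0 < C' by rewrite /C' ltr_pwDr.
exists C' => n n1.
have N0 : 0 < n%:R :> R by rewrite ltr0n.
have nun : 0 < nu n := nu0 n n1.
set B := C' * nu n.
have B0 : 0 < B by rewrite mulr_gt0.
have hup : forall a b : 'I_n -> R, nonoverlapping a b ->
   (\sum_(j < n) (incr_abs u v (a j) (b j)) `^ p) `^ p^-1 <= B.
  move=> a b hab.
  have h := hC n n1; rewrite /upsilon in h.
  have := le_trans (ereal_sup_ubound (ex_intro _ a (ex_intro _ b (conj hab erefl)))) h.
  rewrite lee_fin => h3; apply: (le_trans h3).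
  by rewrite /B ler_pM2r // (le_trans (ler_norm C)) // lerDl.
set y := n%:R `^ p^-1.
have y0 : 0 < y by rewrite /y powR_gt0.
have key : forall al be : R, al ^+ 2 + be ^+ 2 = 1 ->
    al * fourier_re u v n + be * fourier_im u v n <= (B / y) / 2.
  move=> al be hab.
  pose h := (pi : R) / n%:R.
  have h0 : 0 < h by rewrite /h divr_gt0 // pi_gt0.
  have hpi : 2 * pi = (2 * n)%:R * h.
    by rewrite /h natrM -mulrA [n%:R * _]mulrC divfK ?gt_eqF.
  pose D := `[0, 2 * (pi : R)]%classic.
  have mD : measurable D by exact: measurable_itv.
  pose fre := fun x : R => u x * cos (n%:R * x) + v x * sin (n%:R * x).
  pose fim := fun x : R => v x * cos (n%:R * x) - u x * sin (n%:R * x).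
  have mscale : measurable_fun [set: R] (fun x : R => n%:R * x).
    by apply: measurable_funM => //; exact: measurable_cst.
  have mcos : measurable_fun [set: R] (fun x : R => cos (n%:R * x)).
    apply: measurableT_comp mscale.
    by apply: continuous_measurable_fun; exact: continuous_cos.
  have msin : measurable_fun [set: R] (fun x : R => sin (n%:R * x)).
    apply: measurableT_comp mscale.
    by apply: continuous_measurable_fun; exact: continuous_sin.
  have mfre : measurable_fun D fre.
    apply: measurable_funD; apply: measurable_funM => //; exact: measurable_funTS.
  have mfim : measurable_fun D fim.
    apply: measurable_funB; apply: measurable_funM => //; exact: measurable_funTS.
  have bfre x : `|fre x| <= M + M.
    apply: (le_trans (ler_normD _ _)); apply: lerD; rewrite normrM.
    - by rewrite -[M]mulr1 ler_pM // ?(hM x).1 ?cos_max.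
    - by rewrite -[M]mulr1 ler_pM // ?(hM x).2 ?sin_max.
  have bfim x : `|fim x| <= M + M.
    apply: (le_trans (ler_normB _ _)); apply: lerD; rewrite normrM.
    - by rewrite -[M]mulr1 ler_pM // ?(hM x).2 ?cos_max.
    - by rewrite -[M]mulr1 ler_pM // ?(hM x).1 ?sin_max.
  pose Gre := fre \_ D; pose Gim := fim \_ D.
  have mGre : measurable_fun [set: R] Gre := (measurable_restrictT _ mD).1 mfre.
  have mGim : measurable_fun [set: R] Gim := (measurable_restrictT _ mD).1 mfim.
  have MM : 0 <= M + M by rewrite addr_ge0.
  have bGre x : `|Gre x| <= M + M.
    by rewrite /Gre patchE; case: ifP => _ //; rewrite normr0.
  have bGim x : `|Gim x| <= M + M.
    by rewrite /Gim patchE; case: ifP => _ //; rewrite normr0.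
  pose G := fun x => al * Gre x + be * Gim x.
  pose KG := `|al| * (M + M) + `|be| * (M + M).
  have mGa : measurable_fun [set: R] (fun x => al * Gre x).
    by apply: measurable_funM => //; exact: measurable_cst.
  have mGb : measurable_fun [set: R] (fun x => be * Gim x).
    by apply: measurable_funM => //; exact: measurable_cst.
  have bGa x : `|al * Gre x| <= `|al| * (M + M) by rewrite normrM ler_wpM2l.
  have bGb x : `|be * Gim x| <= `|be| * (M + M) by rewrite normrM ler_wpM2l.
  have mG : measurable_fun [set: R] G by exact: measurable_funD.
  have bG x : `|G x| <= KG by apply: (le_trans (ler_normD _ _)); exact: lerD.
  have hre : fourier_re u v n = (2 * pi)^-1 * \int[lebesgue_measure]_(x in D) Gre x.
    by rewrite /fourier_re; congr (_ * _); apply: eq_Rintegral => x xD; rewrite /Gre patchT.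
  have him : fourier_im u v n = (2 * pi)^-1 * \int[lebesgue_measure]_(x in D) Gim x.
    by rewrite /fourier_im; congr (_ * _); apply: eq_Rintegral => x xD; rewrite /Gim patchT.
  have hint : al * fourier_re u v n + be * fourier_im u v n =
      (2 * pi)^-1 * \int[lebesgue_measure]_(x in D) G x.
    have iGre : lebesgue_measure.-integrable D (EFin \o Gre) := bdd_int 0 (2 * pi) mGre bGre.
    have iGim : lebesgue_measure.-integrable D (EFin \o Gim) := bdd_int 0 (2 * pi) mGim bGim.
    have iGa : lebesgue_measure.-integrable D (EFin \o (fun x => al * Gre x)) := bdd_int 0 (2 * pi) mGa bGa.
    have iGb : lebesgue_measure.-integrable D (EFin \o (fun x => be * Gim x)) := bdd_int 0 (2 * pi) mGb bGb.
    rewrite hre him /G RintegralD // !RintegralZl //.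
    by rewrite mulrCA [be * _]mulrCA -mulrDr.
  have e1 : \int[lebesgue_measure]_(x in D) G x =
      \sum_(j < 2 * n) \int[lebesgue_measure]_(t in `[0, h]) G (t + j%:R * h).
    rewrite /D hpi.
    have := @Rint_sumitv R G KG 0 h (2 * n) mG bG (ltW h0).
    rewrite add0r => ->.
    apply: eq_bigr => j _.
    have := @Rint_shift R G KG (j%:R * h) 0 h mG bG.
    by rewrite add0r [h + _]addrC.
  have mF : forall j : nat, measurable_fun [set: R] (fun t => G (t + j%:R * h)).
    by move=> j; exact: measurableT_comp mG (mshift _).
  have e2 := @Rint_sum R (fun j t => G (t + j%:R * h)) KG 0 h (2 * n) mF (fun j x => bG _).
  rewrite /= in e2.
  have pw : forall t, `[0, h]%classic t -> \sum_(j < 2 * n) G (t + j%:R * h) <= B * n%:R / y.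
    move=> t /=; rewrite in_itv /= => /andP[t0 th].
    rewrite (pair_sum (fun j => G (t + j%:R * h))).
    pose a (k : 'I_n) := t + (2 * k)%N%:R * h.
    pose b (k : 'I_n) := t + (2 * k).+1%:R * h.
    have hnh (K : R) : n%:R * (K * h) = K * pi.
      by rewrite mulrCA; congr (_ * _); rewrite /h mulrC divfK ?gt_eqF.
    have hK (k : 'I_n) : (k%:R + 1 <= n%:R :> R).
      by rewrite natr1 ler_nat; exact: ltn_ord.
    have ab (k : 'I_n) : [/\ 0 <= a k, a k <= b k & b k <= 2 * pi].
      have := hK k; have k0 : 0 <= k%:R :> R by [].
      rewrite /a /b hpi !natrM -[(2 * k).+1%:R]natr1 natrM /=.
      move=> hk; split; nra.
    have inD (x : R) : 0 <= x -> x <= 2 * pi -> x \in D.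
      by move=> x0 x2; rewrite /D inE /= in_itv /= x0 x2.
    have pairle (k : 'I_n) : G (a k) + G (b k) <= incr_abs u v (a k) (b k).
      have [a0 abk b2] := ab k.
      have aD : a k \in D by apply: inD => //; exact: le_trans abk b2.
      have bD : b k \in D by apply: inD => //; exact: le_trans a0 abk.
      rewrite /G /Gre /Gim !patchT // /fre /fim.
      have -> : n%:R * a k = n%:R * t + (2 * k)%N%:R * pi by rewrite /a mulrDr hnh.
      have -> : n%:R * b k = n%:R * t + (2 * k).+1%:R * pi by rewrite /b mulrDr hnh.
      rewrite !cosDnpi !sinDnpi m1_even m1_odd !mul1r !mulN1r.
      set c := cos _; set sn := sin _.
      have hc : (al * c - be * sn) ^+ 2 + (al * sn + be * c) ^+ 2 = 1.
        have -> : (al * c - be * sn) ^+ 2 + (al * sn + be * c) ^+ 2 =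
          (al ^+ 2 + be ^+ 2) * (c ^+ 2 + sn ^+ 2) by ring.
        by rewrite hab /c /sn cos2Dsin2 mulr1.
      have := cs_ineq (u (a k) - u (b k)) (v (a k) - v (b k)) hc.
      rewrite /incr_abs -(opprB (u (a k))) -(opprB (v (a k))) !sqrrN.
      move=> H; apply: le_trans H; rewrite le_eqVlt; apply/orP; left; apply/eqP; ring.
    apply: le_trans (ler_sum _ (fun k _ => pairle k)) _.
    apply: holder_sum => //.
    - by move=> k; exact: sqrtr_ge0.
    - apply: hup; split.
      + by move=> j; have [? ? ?] := ab j.
      + move=> i j ij.
        have hi := hK i; have hj := hK j.
        rewrite /a /b -[(2 * i).+1%:R]natr1 -[(2 * j).+1%:R]natr1 !natrM /=.
        have [lt_ij|lt_ji] : (i < j)%N \/ (j < i)%N.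
          case: (ltngtP i j) => [?|?|eqij]; [by left|by right|].
          by move: ij; rewrite (val_inj eqij) eqxx.
        * left; have : (i%:R + 1 <= j%:R :> R) by rewrite natr1 ler_nat.
          by move=> hij; nra.
        * right; have : (j%:R + 1 <= i%:R :> R) by rewrite natr1 ler_nat.
          by move=> hij; nra.
  have e3 : \int[lebesgue_measure]_(t in `[0, h]) (\sum_(j < 2 * n) G (t + j%:R * h))
      <= B * n%:R / y * h.
    have -> : B * n%:R / y * h = \int[lebesgue_measure]_(t in `[0, h]) (B * n%:R / y).
      rewrite Rintegral_cst //; congr (_ * _).
      set z := (X in fine X); have -> : z = _ := lebesgue_measure_itv `[0, h]%R.
      by rewrite /= lte_fin h0 sube0.
    apply: le_Rintegral => //.
    - exact: int_sum mF (fun j x => bG _).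
    - by apply: (@bdd_int R _ `|B * n%:R / y|); [exact: measurable_cst | move=> ?].
  rewrite hint e1 -e2.
  apply: le_trans (ler_wpM2l _ e3) _; first by rewrite invr_ge0 mulr_ge0 // pi_ge0.
  rewrite /h le_eqVlt; apply/orP; left; apply/eqP.
  have pi0 : (pi : R) != 0 by rewrite gt_eqF // pi_gt0.
  move: pi0; generalize (pi : R) => P P0.
  field.
  by rewrite P0 !gt_eqF.
set re := fourier_re u v n; set im := fourier_im u v n.
rewrite -/B -/y.
have BY0 : 0 <= B / y by rewrite divr_ge0 // ltW.
have [S0|Sn0] := eqVneq (fourier_abs u v n) 0; first by rewrite S0.
set S := fourier_abs u v n in Sn0 *.
have S0 : 0 < S by rewrite lt0r Sn0 sqrtr_ge0.
have hS2 : S ^+ 2 = re ^+ 2 + im ^+ 2 by rewrite sqr_sqrtr // addr_ge0 // sqr_ge0.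
have := key (re / S) (im / S).
rewrite !expr_div_n -mulrDl -hS2 mulfV ?expf_neq0 // => /(_ erefl).
have -> : re / S * re + im / S * im = S.
  by rewrite mulrAC [im / S * im]mulrAC -mulrDl -!expr2 -hS2 expr2 mulfK.
move=> h; apply: (le_trans h); lra.
Qed.
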